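(* Let $s\in S(2^\infty)$ with $s^2=e$, $s\ne e$, and let $\mathrm{supp}(s)=\{x\in X: s(x)\neq x\}$. Then in $G=S(2^\infty)\ltimes \widetilde C(X;\mathbb{Z}_2)$, $$\mathrm{fpc}(s)=\{e,\ s,\ \widetilde f_{\mathrm{supp}(s)},\ s\widetilde f_{\mathrm{supp}(s)}\}.$$
   Context: For a group $G$ and $g\in G$, $C_G(g)$ is the centralizer of $g$ and $\mathrm{fpc}(g)=\{h\in G:\ \{t^{-1}ht: t\in C_G(g)\}\text{ is finite}\}$. For $n\ge1$ let $S(2^n)$ be the symmetric group of the finite set $\{0,1\}^n$, embedded in $S(2^{n+1})$ via $s\mapsto\tilde s$, $\tilde s(x,y)=(s(x),y)$ ($x\in\{0,1\}^n$, $y\in\{0,1\}$); $S(2^\infty)=\bigcup_n S(2^n)$. Let $X=\{0,1\}^{\mathbb N}$; $S(2^\infty)$ acts on $X$ by homeomorphisms via $s(x,y)=(s(x),y)$ for $s\in S(2^n)$, $x\in\{0,1\}^n$, $y\in\{0,1\}^{\mathbb N}$. $C(X;\mathbb Z_2)$ is the abelian group of continuous maps $X\to\mathbb Z_2$ under pointwise addition; its elements are $f_A=\mathbf 1_A$ for clopen $A\subseteq X$, with $f_Af_B=f_{A\triangle B}$. $S(2^\infty)$ acts by $g\cdot f_A=f_{g(A)}$. The constant functions $\{f_\emptyset,f_X\}$ form an invariant subgroup and $\widetilde C(X;\mathbb Z_2)$ is the quotient group; $\widetilde f_A$ denotes the class of $f_A$ (so $\widetilde f_A=\widetilde f_{X\setminus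 A}$). $G=S(2^\infty)\ltimes\widetilde C(X;\mathbb Z_2)$, with $g\widetilde f_Ag^{-1}=\widetilde f_{g(A)}$. *)

(* Defs.v *)
From Stdlib Require Import ClassicalEpsilon.
From mathcomp Require Import all_boot all_fingroup.
Set Implicit Arguments. Unset Strict Implicit. Unset Printing Implicit Defensive.

Definition X := nat -> bool.

Definition prefix (n : nat) (x : X) : {ffun 'I_n -> bool} := [ffun i : 'I_n => x i].

(* action on X of p in S(2^n): p(x,y) = (p(x),y) *)
Definition perm_act (n : nat) (p : {perm {ffun 'I_n -> bool}}) (x : X) : X :=
  fun i => match @insub nat (fun k => k < n) 'I_n i with
           | Some j => p (prefix n x) j
           | None => x i
           end.

(* s : X -> X is (the action of) an element of S(2^oo) = \bigcup_n S(2^n) *)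
Definition in_S2inf (s : X -> X) : Prop :=
  exists n (p : {perm {ffun 'I_n -> bool}}), forall x, s x = perm_act p x.

(* A : X -> bool is the indicator of a clopen subset of X
   (clopens of the Cantor space = finite unions of cylinders) *)
Definition clopen (A : X -> bool) : Prop :=
  exists n (B : {set {ffun 'I_n -> bool}}), forall x, A x = (prefix n x \in B).

(* Elements of G = S(2^oo) |x C~(X;Z2), written s * f~_A *)
Record Gelt := mkG { gs : X -> X ; gA : X -> bool }.

Definition inG (g : Gelt) : Prop := in_S2inf (gs g) /\ clopen (gA g).

(* equality in G: same permutation, and f~_A = f~_B iff B = A or B = X \ A *)
Definition Geq (g h : Gelt) : Prop :=
  (forall x, gs g x = gs h x) /\
  ((forall x, gA g x = gA h x) \/ (forall x, gA g x = ~~ gA h x)).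

(* (s f_A)(t f_B) = (st) (t^{-1} f_A t) f_B = (st) f_{t^{-1}(A) \triangle B} *)
Definition gmul (g h : Gelt) : Gelt :=
  mkG (fun x => gs g (gs h x)) (fun x => addb (gA g (gs h x)) (gA h x)).

Definition gone : Gelt := mkG (fun x => x) (fun _ => false).
Definition gperm (s : X -> X) : Gelt := mkG s (fun _ => false).
Definition gfun (A : X -> bool) : Gelt := mkG (fun x => x) A.

Definition gfinite (P : Gelt -> Prop) : Prop :=
  exists l : seq Gelt, forall k, P k -> exists2 k', List.In k' l & Geq k k'.

Definition centralizes (g t : Gelt) : Prop := inG t /\ Geq (gmul t g) (gmul g t).

(* k = t^{-1} h t, i.e. t k = h t *)
Definition fpc (g h : Gelt) : Prop :=
  inG h /\
  gfinite (fun k => inG k /\ exists t, centralizes g t /\ Geq (gmul t k) (gmul h t)).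

Definition supp (s : X -> X) : X -> bool :=
  fun x => if excluded_middle_informative (s x <> x) then true else false.

(* Main.v *)
From Stdlib Require Import Classical ClassicalEpsilon FunctionalExtensionality.
From mathcomp Require Import all_boot all_fingroup.
From mathcomp Require Import zify.
Require Import Defs.
Set Implicit Arguments. Unset Strict Implicit. Unset Printing Implicit Defensive.

Notation PP N := {ffun 'I_N -> bool}.

Definition liftf N (f : PP N -> PP N) (x : X) : X :=
  fun i => match @insub nat (fun k => k < N) 'I_N i with
           | Some j => f (prefix N x) j
           | None => x i end.

Definition ext N (u : PP N) : X :=
  fun i => match @insub nat (fun k => k < N) 'I_N i with
           | Some j => u j | None => false end.

Lemma insub_ord N (j : 'I_N) : @insub nat (fun k => k < N) 'I_N (val j) = Some j.
Proof. exact: valK. Qed.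

Lemma insub_ge N i : N <= i -> @insub nat (fun k => k < N) 'I_N i = None.
Proof. by move=> H; apply: insubF; rewrite ltnNge H. Qed.

Lemma prefixE N x (j : 'I_N) : prefix N x j = x j.
Proof. by rewrite ffunE. Qed.

Lemma prefix_liftf N f x : prefix N (@liftf N f x) = f (prefix N x).
Proof. by apply/ffunP => j; rewrite ffunE /liftf insub_ord. Qed.

Lemma liftf_tail N f x i : N <= i -> @liftf N f x i = x i.
Proof. by move=> H; rewrite /liftf insub_ge. Qed.

Lemma prefix_ext N (u : PP N) : prefix N (ext u) = u.
Proof. by apply/ffunP => j; rewrite ffunE /ext insub_ord. Qed.

Lemma ext_tail N (u : PP N) i : N <= i -> ext u i = false.
Proof. by move=> H; rewrite /ext insub_ge. Qed.

Lemma agree_prefix N x y : prefix N x = prefix N y <-> forall i, i < N -> x i = y i.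
Proof.
split.
- move=> H i Hi. have := congr1 (fun f : PP N => f (Ordinal Hi)) H. by rewrite !ffunE.
- move=> H; apply/ffunP => j; rewrite !ffunE; exact: H.
Qed.

Lemma eqX N (x y : X) : prefix N x = prefix N y -> (forall i, N <= i -> x i = y i) -> x = y.
Proof.
move=> /agree_prefix H1 H2; apply: functional_extensionality => i.
case: (ltnP i N) => Hi; [exact: H1 | exact: H2].
Qed.

Lemma liftf_id N x : @liftf N id x = x.
Proof. apply: (@eqX N); [by rewrite prefix_liftf | exact: liftf_tail]. Qed.

Lemma liftf_comp N f g x : @liftf N f (@liftf N g x) = liftf (fun u => f (g u)) x.
Proof.
apply: (@eqX N); first by rewrite !prefix_liftf.
by move=> i Hi; rewrite !liftf_tail.
Qed.

Lemma liftf_ext N f g x : (forall u, f u = g u) -> @liftf N f x = liftf g x.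
Proof. move=> H; apply: (@eqX N); first by rewrite !prefix_liftf. by move=> i Hi; rewrite !liftf_tail. Qed.

Lemma prefix_le M M' x y : M <= M' -> prefix M' x = prefix M' y -> prefix M x = prefix M y.
Proof. move=> HM /agree_prefix H; apply/agree_prefix => i Hi; apply: H; exact: leq_trans Hi HM. Qed.

Definition good M (f : X -> X) :=
  (forall x i, M <= i -> f x i = x i) /\
  (forall x y, prefix M x = prefix M y -> prefix M (f x) = prefix M (f y)).

Lemma good_liftf N f : good N (@liftf N f).
Proof. split; first exact: liftf_tail. by move=> x y H; rewrite !prefix_liftf H. Qed.

Lemma good_mono M M' f : good M f -> M <= M' -> good M' f.
Proof.
move=> [H1 H2] HM; split.
- move=> x i Hi; apply: H1; exact: leq_trans HM Hi.
- move=> x y Hxy; apply/agree_prefix => i Hi.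
  case: (ltnP i M) => HiM.
  + have := H2 _ _ (prefix_le HM Hxy). by move/agree_prefix; apply.
  + rewrite !H1 //. by move/agree_prefix: Hxy; apply.
Qed.

Lemma good_ext M f g : (forall x, f x = g x) -> good M g -> good M f.
Proof. move=> E [H1 H2]; split=> [x i|x y]; rewrite ?E; [exact: H1| exact: H2]. Qed.

Lemma good_comp M f g : good M f -> good M g -> good M (fun x => f (g x)).
Proof.
move=> [F1 F2] [G1 G2]; split=> [x i Hi|x y H]; first by rewrite F1 // G1.
by apply: F2; apply: G2.
Qed.

Lemma good_liftf_eq N f : good N f -> forall x, f x = @liftf N (fun u => prefix N (f (ext u))) x.
Proof.
move=> [H1 H2] x; apply: (@eqX N).
- by rewrite prefix_liftf; apply: H2; rewrite prefix_ext.
- by move=> i Hi; rewrite liftf_tail // H1.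
Qed.

Lemma good_inS2 N f : good N f -> injective f -> in_S2inf f.
Proof.
move=> G Hinj.
pose sg := fun u : PP N => prefix N (f (ext u)).
have sginj : injective sg.
  move=> u v E; rewrite -(prefix_ext u) -(prefix_ext v); congr (prefix N _).
  apply: Hinj; apply: (@eqX N) => // i Hi.
  by rewrite !G.1 // !ext_tail.
exists N, (perm sginj) => x.
rewrite (good_liftf_eq G x) /perm_act /liftf; apply: functional_extensionality => i.
by case: insub => // j; rewrite permE.
Qed.

Lemma S2_liftf f : in_S2inf f -> exists n (sg : PP n -> PP n), injective sg /\ forall x, f x = liftf sg x.
Proof. move=> [n [p Hp]]; exists n, p; split; [exact: perm_inj | exact: Hp]. Qed.

Lemma S2_good f : in_S2inf f -> exists n, forall M, n <= M -> good M f.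
Proof.
move=> /S2_liftf [n [sg [_ Hf]]]; exists n => M HM.
apply: (good_mono _ HM); apply: (good_ext Hf); exact: good_liftf.
Qed.

Lemma S2_inj f : in_S2inf f -> injective f.
Proof.
move=> /S2_liftf [n [sg [Hi Hf]]] x y; rewrite !Hf => E.
apply: (@eqX n).
- apply: Hi; by rewrite -!prefix_liftf E.
- move=> i Hn; by rewrite -(liftf_tail sg x Hn) -(liftf_tail sg y Hn) E.
Qed.

Definition cgood M (A : X -> bool) := forall x y, prefix M x = prefix M y -> A x = A y.

Lemma cgood_clopen M A : cgood M A -> clopen A.
Proof.
move=> H; exists M, [set u | A (ext u)] => x; rewrite inE; apply: H.
by rewrite prefix_ext.
Qed.

Lemma clopen_cgood A : clopen A -> exists n, forall M, n <= M -> cgood M A.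
Proof.
move=> [n [B HB]]; exists n => M HM x y E.
by rewrite !HB (prefix_le HM E).
Qed.

Lemma cgood_comp M f A : good M f -> cgood M A -> cgood M (fun x => A (f x)).
Proof. move=> [_ G] H x y E; apply: H; exact: G. Qed.

Lemma GeqE g h : Geq g h <-> (forall x, gs g x = gs h x) /\ exists c, forall x, gA g x = addb (gA h x) c.
Proof.
split.
- move=> [H1 [H2|H2]]; split=> //; [exists false | exists true] => x; by rewrite H2 ?addbF ?addbT.
- move=> [H1 [[|] H2]]; split=> //; [right|left] => x; by rewrite H2 ?addbF ?addbT.
Qed.

Lemma Geq_sym g h : Geq g h -> Geq h g.
Proof.
move=> /GeqE [H1 [c H2]]; apply/GeqE; split=> [x|]; first by rewrite H1.
exists c => x; by rewrite H2 -addbA addbb addbF.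
Qed.

Lemma Geq_trans g h k : Geq g h -> Geq h k -> Geq g k.
Proof.
move=> /GeqE [H1 [c H2]] /GeqE [H3 [d H4]]; apply/GeqE; split=> [x|]; first by rewrite H1 H3.
exists (addb d c) => x; by rewrite H2 H4 addbA.
Qed.

Lemma nofin_aux (l : seq Gelt) : forall F : nat -> Gelt,
  (forall i j, i <> j -> ~ Geq (F i) (F j)) ->
  (forall j, exists2 k', List.In k' l & Geq (F j) k') -> False.
Proof.
elim: l => [|a l IH] F Hd Hl.
- by case: (Hl 0).
- case: (classic (exists j0, Geq (F j0) a)) => [[j0 Hj0]|Hn].
  + pose m j := if j < j0 then j else j.+1.
    have mne : forall j, m j <> j0 by move=> j; rewrite /m; case: ltnP => H E; lia.
    have minj : forall i j, i <> j -> m i <> m j.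
      by move=> i j; rewrite /m; case: (ltnP i j0) => H1; case: (ltnP j j0) => H2 Hij E; lia.
    apply: (IH (fun j => F (m j))).
    * move=> i j Hij; exact: Hd (minj _ _ Hij).
    * move=> j; case: (Hl (m j)) => k' [Ek|Hk] Hg.
      - subst k'. exfalso; apply: (Hd _ _ (mne j)).
        apply: Geq_trans Hg _; exact: Geq_sym.
      - by exists k'.
  + apply: (IH F Hd) => j; case: (Hl j) => k' [Ek|Hk] Hg.
    * subst k'; exfalso; apply: Hn; by exists j.
    * by exists k'.
Qed.

Lemma nofin (Pr : Gelt -> Prop) (F : nat -> Gelt) :
  (forall j, Pr (F j)) -> (forall i j, i <> j -> ~ Geq (F i) (F j)) -> ~ gfinite Pr.
Proof.
move=> HP Hd [l Hl]; apply: (nofin_aux Hd) => j; exact: Hl.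
Qed.

Lemma suppT s x : supp s x = true <-> s x <> x.
Proof. rewrite /supp; case: excluded_middle_informative => //. Qed.

Lemma suppF s x : supp s x = false <-> s x = x.
Proof. rewrite /supp; case: excluded_middle_informative => H; split => // _; exact: NNPP. Qed.

Lemma tperm_conj (T : finType) (sg : T -> T) (a b w : T) :
  involutive sg -> sg (tperm a b w) = tperm (sg a) (sg b) (sg w).
Proof.
move=> Hs; have Hi := inv_inj Hs.
case: tpermP => [->|->|/eqP Ha /eqP Hb]; rewrite ?tpermL ?tpermR //.
rewrite tpermD // (inj_eq Hi) eq_sym //.
Qed.

Lemma tperm_comm (T : finType) (a b c d w : T) :
  a != c -> a != d -> b != c -> b != d ->
  tperm a b (tperm c d w) = tperm c d (tperm a b w).
Proof.
move=> ac ad bc bd.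
case: (tpermP c d w) => [->|->|/eqP Hc /eqP Hd].
- by rewrite (tpermD ac bc) tpermL tpermD.
- by rewrite (tpermD ad bd) tpermR tpermD.
- case: (tpermP a b w) => [Ea|Eb|_ _].
  + subst w; rewrite tpermD // eq_sym //.
  + subst w; rewrite tpermD // eq_sym //.
  + rewrite tpermD // eq_sym //.
Qed.

Lemma cent_facts s t : centralizes (gperm s) t ->
  injective (gs t) /\ (forall x, gs t (s x) = s (gs t x)) /\
  exists c, forall x, gA t (s x) = addb (gA t x) c.
Proof.
move=> [[Ht _] /GeqE [H1 [c H2]]]; split; first exact: S2_inj.
split=> //; exists c => x; move: (H2 x) => /=; by rewrite addbF.
Qed.

Lemma Geq_mulr g h t : Geq g h -> Geq (gmul g t) (gmul h t).
Proof.
move=> /GeqE [H1 [c H2]]; apply/GeqE; split=> [x|] /=; first by rewrite H1.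
exists c => x /=; by rewrite H2 -!addbA (addbC c).
Qed.

Lemma fpc_single s h0 h : inG h -> Geq h h0 ->
  (forall t k, centralizes (gperm s) t -> Geq (gmul t k) (gmul h0 t) -> Geq k h0) ->
  fpc (gperm s) h.
Proof.
move=> Hh E H; split=> //; exists [:: h0] => k [_ [t [Ct Et]]].
exists h0; first by left.
apply: (H t) => //; apply: Geq_trans Et _; exact: Geq_mulr.
Qed.

Lemma supp_comm s T x : injective T -> (forall x, T (s x) = s (T x)) -> supp s (T x) = supp s x.
Proof.
move=> Ti Tc; case: (classic (s x = x)) => Hx.
- have/suppF -> : s (T x) = T x by rewrite -Tc Hx.
  by apply/esym/suppF.
- have/suppT -> : s (T x) <> T x by rewrite -Tc => /Ti.
  by apply/esym/suppT.
Qed.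

Lemma back s h : inG h ->
  Geq h gone \/ Geq h (gperm s) \/ Geq h (gfun (supp s)) \/
  Geq h (gmul (gperm s) (gfun (supp s))) -> fpc (gperm s) h.
Proof.
move=> Hh [E|[E|[E|E]]]; apply: (fpc_single Hh E) => t k Ct /GeqE [K1 [c1 K2]];
  have [Ti [Tc [c3 Ac]]] := cent_facts Ct; apply/GeqE; simpl in *.
- have Kx : forall x, gs k x = x by move=> x; apply: Ti; rewrite K1.
  split=> //; exists c1 => x; move: (K2 x); rewrite Kx.
  by destruct c1, (gA t x), (gA k x).
- have Kx : forall x, gs k x = s x by move=> x; apply: Ti; rewrite K1 Tc.
  split=> //; exists (addb c1 c3) => x; move: (K2 x); rewrite Kx Ac.
  by destruct c1, c3, (gA t x), (gA k x).
- have Kx : forall x, gs k x = x by move=> x; apply: Ti; rewrite K1.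
  split=> //; exists c1 => x; move: (K2 x); rewrite Kx (supp_comm _ Ti Tc).
  by destruct c1, (supp s x), (gA t x), (gA k x).
- have Kx : forall x, gs k x = s x by move=> x; apply: Ti; rewrite K1 Tc.
  split=> //; exists (addb c1 c3) => x; move: (K2 x); rewrite Kx Ac (supp_comm _ Ti Tc).
  by destruct c1, c3, (supp s x), (gA t x), (gA k x).
Qed.

Definition zp N (w : PP N) (i : nat) : X := fun k => if k == N + i then true else ext w k.

Lemma prefix_zp N w i : prefix N (@zp N w i) = w.
Proof.
rewrite -{2}(prefix_ext w); apply/agree_prefix => k Hk; rewrite /zp.
case: eqP => // E; lia.
Qed.

Lemma zp_bit N w i j : @zp N w i (N + j) = (i == j).
Proof.
rewrite /zp; case: eqP => [/addnI ->|H]; first by rewrite eqxx.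
rewrite ext_tail ?leq_addr //; case: eqP => // E; subst; by case: H.
Qed.

Lemma ext_bit N (w : PP N) j : ext w (N + j) = false.
Proof. by rewrite ext_tail ?leq_addr. Qed.

Lemma liftf_bit N f x j : @liftf N f x (N + j) = x (N + j).
Proof. by rewrite liftf_tail ?leq_addr. Qed.

Lemma cgood_mono M M' A : cgood M A -> M <= M' -> cgood M' A.
Proof. move=> H HM x y E; apply: H; exact: prefix_le E. Qed.

Lemma agree_bit M x y i : prefix M x = prefix M y -> i < M -> x i = y i.
Proof. by move/agree_prefix; apply. Qed.

Lemma inS2_id : in_S2inf (fun x => x).
Proof. apply: (@good_inS2 0) => //; split=> // x y E. Qed.

Lemma famA s h N (sg pi : PP N -> PP N) (w : PP N) :
  (forall x, s x = liftf sg x) -> involutive sg ->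
  inG h -> (forall x, gs h x = liftf pi x) -> cgood N (gA h) ->
  pi w != w -> pi w != sg w -> ~ fpc (gperm s) h.
Proof.
move=> Hs Hsg [Hh1 Hh2] Hp HB pw1 pw2 [_ Hfin].
pose A j (x : X) := x (N + j) && ((prefix N x == w) || (prefix N x == sg w)).
have Agood : forall j, cgood (N + j).+1 (A j).
  move=> j x y E; rewrite /A (agree_bit E (ltnSn _)).
  by rewrite (prefix_le _ E) // leqW // leq_addr.
have pgood : forall M, N <= M -> good M (gs h).
  move=> M HM; apply: (good_mono _ HM); apply: (good_ext Hp); exact: good_liftf.
have As : forall j x, A j (s x) = A j x.
  move=> j x; rewrite /A Hs liftf_bit prefix_liftf (inv_eq Hsg) (inj_eq (inv_inj Hsg)).
  by rewrite orbC.
pose F j := mkG (gs h) (fun x => addb (A j (gs h x)) (addb (gA h x) (A j x))).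
apply: (@nofin _ F _ _ Hfin).
- move=> j; split.
  + split=> //; apply: (@cgood_clopen (N + j).+1) => x y E /=.
    rewrite (Agood j _ _ E) (Agood j (gs h x) (gs h y)); last first.
      by apply: (pgood _ _).2 => //; rewrite leqW // leq_addr.
    rewrite (cgood_mono HB _ E) //; by rewrite leqW // leq_addr.
  + exists (gfun (A j)); split.
    * split; first by split; [exact: inS2_id | exact: cgood_clopen (Agood j)].
      apply/GeqE; split=> //= ; exists false => x; by rewrite As.
    * apply/GeqE; split=> //=; exists false => x.
      by rewrite addbF addbA addbb.
- move=> i j Hij /GeqE [_ [c Hc]].
  have Ab : forall k x, A k (gs h x) = x (N + k) && ((pi (prefix N x) == w) || (pi (prefix N x) == sg w)).
    by move=> k x; rewrite /A Hp liftf_bit prefix_liftf.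
  have Hi0 : forall k, A k (ext w) = false by move=> k; rewrite /A ext_bit.
  move: (Hc (ext w)); rewrite /F /= !Ab !Hi0 !ext_bit /= => E0.
  have c0 : c = false by destruct c, (gA h (ext w)).
  subst c.
  move: (Hc (zp w i)); rewrite /F /= !Ab prefix_zp (negbTE pw1) (negbTE pw2).
  rewrite /A !zp_bit prefix_zp eqxx /=.
  have -> : (i == j) = false by apply/eqP.
  rewrite eqxx /=; by case: (gA h (zp w i)).
Qed.

Definition tt N (tau : PP N -> PP N) (j : nat) (x : X) : X :=
  if x (N + j) then liftf tau x else x.

Lemma tt_bit N tau j x k : @tt N tau j x (N + k) = x (N + k).
Proof. rewrite /tt; case: ifP => // _; exact: liftf_bit. Qed.

Lemma tt_inv N tau j : involutive tau -> involutive (@tt N tau j).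
Proof.
move=> Ht x; rewrite /tt; case Hb: (x (N + j)); last by rewrite Hb.
rewrite liftf_bit Hb liftf_comp -{2}(@liftf_id N x); exact: liftf_ext.
Qed.

Lemma tt_true N tau j x : x (N + j) = true -> @tt N tau j x = liftf tau x.
Proof. by rewrite /tt => ->. Qed.

Lemma tt_false N tau j x : x (N + j) = false -> @tt N tau j x = x.
Proof. by rewrite /tt => ->. Qed.

Lemma tt_comm s N sg tau j x : (forall x, s x = liftf sg x) ->
  (forall u, tau (sg u) = sg (tau u)) -> @tt N tau j (s x) = s (tt tau j x).
Proof.
move=> Hs Hc; rewrite !Hs /tt liftf_bit; case: (x (N + j)) => //.
rewrite !liftf_comp; exact: liftf_ext.
Qed.

Lemma tt_good N tau j : good (N + j).+1 (@tt N tau j).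
Proof.
split.
- move=> x i Hi; rewrite /tt; case: ifP => // _; apply: liftf_tail.
  apply: leq_trans Hi; by rewrite leqW // leq_addr.
- move=> x y E; rewrite /tt (agree_bit E (ltnSn _)); case: ifP => // _.
  apply: (good_mono (good_liftf tau) _).2 E; by rewrite leqW // leq_addr.
Qed.

Lemma famT s h N (sg pi tau : PP N -> PP N) (w : PP N) :
  (forall x, s x = liftf sg x) ->
  inG h -> (forall x, gs h x = liftf pi x) -> cgood N (gA h) ->
  involutive tau -> (forall u, tau (sg u) = sg (tau u)) ->
  (tau (pi (tau w)) != pi w \/ gA h (ext (tau w)) != gA h (ext w)) ->
  ~ fpc (gperm s) h.
Proof.
move=> Hs [Hh1 Hh2] Hp HB Hti Htc Hd [_ Hfin].
have pgood : forall M, N <= M -> good M (gs h).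
  move=> M HM; apply: (good_mono _ HM); apply: (good_ext Hp); exact: good_liftf.
have le1 : forall j, N <= (N + j).+1 by move=> j; rewrite leqW // leq_addr.
have ttinj : forall j, injective (@tt N tau j) by move=> j; apply: inv_inj; exact: tt_inv.
have ttS2 : forall j, in_S2inf (@tt N tau j).
  move=> j; apply: good_inS2 (ttinj j); exact: tt_good.
pose F j := mkG (fun x => tt tau j (gs h (tt tau j x))) (fun x => gA h (tt tau j x)).
apply: (@nofin _ F _ _ Hfin).
- move=> j; split.
  + split=> /=.
    * apply: (@good_inS2 (N + j).+1).
      - apply: good_comp; first exact: tt_good.
        apply: good_comp; [exact: pgood | exact: tt_good].
      - move=> x y /ttinj /(S2_inj Hh1) /ttinj //.
    * apply: (@cgood_clopen (N + j).+1); apply: cgood_comp; first exact: tt_good.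
      exact: cgood_mono HB _.
  + exists (gperm (tt tau j)); split.
    * split; first by split; [exact: ttS2 | exact: (@cgood_clopen 0)].
      apply/GeqE; split=> [x|] /=; first exact: tt_comm.
      by exists false.
    * apply/GeqE; split=> [x|] /=; first by rewrite tt_inv.
      by exists false => x; rewrite !addbF.
- move=> i j Hij /GeqE [Hg [c Hc]].
  have bi : zp w i (N + i) = true by rewrite zp_bit eqxx.
  have bj : zp w i (N + j) = false by rewrite zp_bit; apply/eqP.
  case: Hd => Hd.
  + have e1 : tt tau i (zp w i) = liftf tau (zp w i) := tt_true tau bi.
    have e2 : tt tau i (gs h (liftf tau (zp w i))) = liftf tau (gs h (liftf tau (zp w i))).
      by apply: tt_true; rewrite Hp !liftf_bit.
    have e3 : tt tau j (zp w i) = zp w i := tt_false tau bj.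
    have e4 : tt tau j (gs h (zp w i)) = gs h (zp w i).
      by apply: tt_false; rewrite Hp liftf_bit.
    move: (congr1 (prefix N) (Hg (zp w i))) => /=.
    rewrite e1 e2 e3 e4 !Hp !prefix_liftf prefix_zp => E.
    by rewrite E eqxx in Hd.
  + move: (Hc (ext w)) => /=; rewrite !(tt_false tau (ext_bit _ _)).
    move=> E0; have c0 : c = false by destruct c, (gA h (ext w)).
    subst c; move: (Hc (zp w i)) => /=.
    rewrite (tt_true tau bi) (tt_false tau bj) addbF.
    rewrite (HB _ (ext (tau w))); last by rewrite prefix_liftf prefix_zp prefix_ext.
    rewrite (HB (zp w i) (ext w)); last by rewrite prefix_zp prefix_ext.
    move=> E; by rewrite E eqxx in Hd.
Qed.

Lemma swap2 (T : finType) (sg : T -> T) u v : involutive sg -> sg u != u -> sg v != v ->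
  u != v -> v != sg u ->
  let tau := fun w => tperm (sg u) (sg v) (tperm u v w) in
  involutive tau /\ (forall w, tau (sg w) = sg (tau w)) /\ tau u = v /\ tau (sg u) = sg v.
Proof.
move=> Hs H1 H2 H3 H4 tau.
have d1 : u != sg u by rewrite eq_sym.
have d2 : u != sg v by rewrite -(inv_eq Hs) eq_sym.
have d4 : v != sg v by rewrite eq_sym.
have C : forall w, tperm u v (tperm (sg u) (sg v) w) = tperm (sg u) (sg v) (tperm u v w).
  by move=> w; apply: tperm_comm.
split; [|split; [|split]].
- by move=> w; rewrite /tau C !tpermK.
- move=> w; rewrite /tau !(tperm_conj _ _ _ Hs) !Hs; by rewrite C.
- by rewrite /tau tpermL tpermD // eq_sym.
- rewrite /tau (tpermD d1 H4) tpermL //.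
Qed.

Lemma forward s h : in_S2inf s -> (forall x, s (s x) = x) -> (exists x, s x <> x) ->
  inG h -> fpc (gperm s) h ->
  Geq h gone \/ Geq h (gperm s) \/ Geq h (gfun (supp s)) \/
  Geq h (gmul (gperm s) (gfun (supp s))).
Proof.
move=> HsS Hinv [x0 Hx0] Hh Hf.
have [ns Gs] := S2_good HsS.
have [np Gp] := S2_good Hh.1.
have [nb Gb] := clopen_cgood Hh.2.
pose N := ns + np + nb.
have gs' : good N s by apply: Gs; rewrite /N; lia.
have gp' : good N (gs h) by apply: Gp; rewrite /N; lia.
have HB : cgood N (gA h) by apply: Gb; rewrite /N; lia.
have [sg Hsl] : exists sg : PP N -> PP N, forall x, s x = liftf sg x.
  by eexists; exact: good_liftf_eq gs'.
have [pi Hpl] : exists pi : PP N -> PP N, forall x, gs h x = liftf pi x.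
  by eexists; exact: good_liftf_eq gp'.
have Hsg : involutive sg.
  move=> u; have := congr1 (prefix N) (Hinv (ext u)).
  by rewrite !Hsl !prefix_liftf.
have piinj : injective pi.
  move=> u v E.
  have : gs h (ext u) = gs h (ext v).
    apply: (@eqX N); first by rewrite !Hpl !prefix_liftf ?prefix_ext E.
    by move=> i Hi; rewrite !Hpl !liftf_tail // !ext_tail.
  by move/(S2_inj Hh.1)/(congr1 (prefix N)); rewrite !prefix_ext.
case: (classic (exists w, pi w != w /\ pi w != sg w)) => [[w [Hw1 Hw2]]|Hna].
  by exfalso; apply: (famA Hsl Hsg Hh Hpl HB Hw1 Hw2 Hf).
have Hpw : forall w, pi w = w \/ pi w = sg w.
  move=> w; case: (classic (pi w = w)) => H1; [by left|right].
  apply: NNPP => H2; apply: Hna; exists w; split; apply/eqP => //.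
case: (classic (exists wa wb, pi wa = sg wa /\ sg wa != wa /\ pi wb = wb /\ sg wb != wb)).
  move=> [wa [wb [Ha1 [Ha2 [Hb1 Hb2]]]]]; exfalso.
  have d1 : wa != wb.
    apply/eqP => E; subst wb; move: Ha2; by rewrite -Ha1 Hb1 eqxx.
  have d2 : wb != sg wa.
    apply/eqP => E; move/eqP: d1; apply; apply: piinj; by rewrite Ha1 -E Hb1.
  have [Ti [Tc [Tu Tsu]]] := swap2 Hsg Ha2 Hb2 d1 d2.
  set tau := (fun w => _) in Ti Tc Tu Tsu.
  apply: (famT Hsl Hh Hpl HB Ti Tc (w := wb) _ Hf); left.
  have -> : tau wb = wa by rewrite -Tu Ti.
  rewrite Ha1 Hb1; have -> : tau (sg wa) = sg wb by exact: Tsu.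
  by [].
move=> Hnb.
have Hp2 : (forall w, pi w = w) \/ (forall w, pi w = sg w).
  case: (classic (exists wa, pi wa = sg wa /\ sg wa != wa)) => [[wa [Ha1 Ha2]]|Hn].
  - right => w; case: (Hpw w) => // E.
    case: (classic (sg w = w)) => [Hw'|Hw]; first by rewrite E Hw'.
    exfalso; apply: Hnb; exists wa, w; split; [exact: Ha1|split; [exact: Ha2|split; [exact: E|exact/eqP]]].
  - left => w; case: (Hpw w) => // E.
    case: (classic (sg w = w)) => [Hw'|Hw]; first by rewrite E Hw'.
    exfalso; apply: Hn; exists w; split; [exact: E | exact/eqP].
pose bt (u : PP N) := gA h (ext u).
have Bx : forall x, gA h x = bt (prefix N x) by move=> x; apply: HB; rewrite prefix_ext.
have fixE : forall x, s x = x <-> sg (prefix N x) = prefix N x.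
  move=> x; split => [E|E].
  - by rewrite -{2}E Hsl prefix_liftf.
  - rewrite Hsl; apply: (@eqX N); first by rewrite prefix_liftf.
    by move=> i Hi; rewrite liftf_tail.
case: (classic (exists u v, sg u = u /\ sg v = v /\ bt u != bt v)).
  move=> [u [v [Hu [Hv Hbt]]]]; exfalso.
  apply: (famT Hsl Hh Hpl HB (tau := tperm u v) (w := u) _ _ _ Hf).
  - exact: tpermK.
  - by move=> w; rewrite tperm_conj // Hu Hv.
  - by right; rewrite tpermL eq_sym.
move=> Hc1.
case: (classic (exists u v, sg u != u /\ sg v != v /\ bt u != bt v)).
  move=> [u [v [Hu [Hv Hbt]]]]; exfalso.
  case: (eqVneq v (sg u)) => Evu.
  - subst v.
    apply: (famT Hsl Hh Hpl HB (tau := tperm u (sg u)) (w := u) _ _ _ Hf).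
    + exact: tpermK.
    + by move=> w; rewrite tperm_conj // Hsg tpermC.
    + by right; rewrite tpermL eq_sym.
  - have d1 : u != v by apply/eqP => E; subst v; rewrite eqxx in Hbt.
    have [Ti [Tc [Tu Tsu]]] := swap2 Hsg Hu Hv d1 Evu.
    apply: (famT Hsl Hh Hpl HB Ti Tc (w := u) _ Hf).
    by right; rewrite Tu eq_sym.
move=> Hc2.
have Hfix : forall x y, s x = x -> s y = y -> gA h x = gA h y.
  move=> x y /fixE Hx /fixE Hy; rewrite !Bx; apply: NNPP => Hne; apply: Hc1.
  exists (prefix N x), (prefix N y); repeat split => //; exact/eqP.
have Hmov : forall x, s x <> x -> gA h x = gA h x0.
  move=> x Hx; rewrite !Bx; apply: NNPP => Hne; apply: Hc2.
  exists (prefix N x), (prefix N x0); repeat split => //; try exact/eqP.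
  - by apply/eqP => /fixE.
  - by apply/eqP => /fixE.
have [cf Hcf] : exists cf, forall x, gA h x = if supp s x then gA h x0 else cf.
  case: (classic (exists y0, s y0 = y0)) => [[y0 Hy0]|Hny].
  - exists (gA h y0) => x; case: (classic (s x = x)) => Hx.
    + by rewrite (proj2 (suppF s x) Hx); apply: Hfix.
    + by rewrite (proj2 (suppT s x) Hx); apply: Hmov.
  - exists false => x; have Hx : s x <> x by move=> E; apply: Hny; exists x.
    by rewrite (proj2 (suppT s x) Hx); apply: Hmov.
have Hgs : (forall x, gs h x = x) \/ (forall x, gs h x = s x).
  case: Hp2 => Hp2; [left|right] => x.
  - by rewrite Hpl -{2}(@liftf_id N x); apply: liftf_ext.
  - by rewrite Hpl Hsl; apply: liftf_ext.
case: Hgs => Hgs; case: (eqVneq (gA h x0) cf) => Ec.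
- left; apply/GeqE; split=> //; exists cf => x; rewrite Hcf /=; by case: (supp s x).
- right; right; left; apply/GeqE; split=> //; exists cf => x; rewrite Hcf /=.
  by move: Ec; destruct (supp s x), (gA h x0), cf.
- right; left; apply/GeqE; split=> //; exists cf => x; rewrite Hcf /=; by case: (supp s x).
- right; right; right; apply/GeqE; split=> //; exists cf => x; rewrite Hcf /=.
  by move: Ec; destruct (supp s x), (gA h x0), cf.
Qed.

Theorem proposition3p4 (s : X -> X) :
  in_S2inf s ->
  (forall x, s (s x) = x) ->
  (exists x, s x <> x) ->
  forall h : Gelt, inG h ->
    (fpc (gperm s) h <->
       Geq h gone \/ Geq h (gperm s) \/ Geq h (gfun (supp s)) \/
       Geq h (gmul (gperm s) (gfun (supp s)))).
Proof.
move=> Hs Hinv Hne h Hh; split; [exact: forward | exact: back].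
Qed.
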